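(* Let $w \in \mathbb{R}^n$ with $w_j > 0$ for all $j$, and let $x \in \mathbb{R}^n$ with $x_j > 0$ for $2 \le j \le n$. Define $c_x : [x_1^-, \infty) \to \mathbb{R}$, $c_x(t) = \|x - \phi_t(x)\|^2$. Then: (i) $c_x$ is piecewise $C^\infty$ with break points $b_j = \frac{w_1}{w_j} x_j$ ($2\le j\le n$), it is continuously differentiable at these break points, each smooth piece is strongly convex, and $c_x$ is strongly convex on $[x_1^-,\infty)$ and attains its minimum. (ii) Let $t^* = \arg\min_{t \in [x_1^-,\infty)} c_x(t)$. Then the Euclidean projection of $x$ onto $\Omega_1$ is \[ \arg\min_{z \in \Omega_1} \|x - z\| = \begin{cases} \phi_{x_1^+}(x) & \text{if } t^* < x_1^+,\\ \phi_{t^*}(x) & \text{if } t^* \in [x_1^+, 1],\\ \phi_1(x) & \text{if } t^* > 1.\end{cases} \]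
   Context: $\|\cdot\|$ is the Euclidean norm on $\mathbb{R}^n$. $\Omega_1 := \{ z \in \mathbb{R}^n_+ : z_1 \le 1,\ w_1 z_j \le w_j z_1 \text{ for } 2 \le j \le n\}$. For $t \in \mathbb{R}$, $\phi_t : \mathbb{R}^n \to \mathbb{R}^n$ is defined by $\phi_t(x)_1 = t$, and for $j \ne 1$: $\phi_t(x)_j = \frac{w_j}{w_1} t$ if $\frac{w_1}{w_j} x_j \ge t$, and $\phi_t(x)_j = x_j$ otherwise. $x_1^+ := \min\{1, \max\{0, x_1\}\}$ and $x_1^- := \min\{0, x_1\}$. *)

(* Defs.v *)
From Stdlib Require Import Reals Lra Lia.
Open Scope R_scope.

(* Vectors of R^n are functions nat -> R, using the paper's 1-based
   coordinates 1..n; values at other indices are irrelevant. *)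

Fixpoint sumR (n : nat) (f : nat -> R) : R :=
  match n with
  | O => 0
  | S m => sumR m f + f (S m)
  end.

Definition norm2 (n : nat) (v : nat -> R) : R := sumR n (fun j => (v j) ^ 2).
Definition enorm (n : nat) (v : nat -> R) : R := sqrt (norm2 n v).

Definition Omega1 (n : nat) (w z : nat -> R) : Prop :=
  (forall j, (1 <= j <= n)%nat -> 0 <= z j) /\
  z 1%nat <= 1 /\
  (forall j, (2 <= j <= n)%nat -> w 1%nat * z j <= w j * z 1%nat).

Definition phi (w : nat -> R) (t : R) (x : nat -> R) : nat -> R :=
  fun j =>
    if Nat.eqb j 1 then t
    else if Rle_dec t (w 1%nat / w j * x j) then w j / w 1%nat * t
    else x j.

Definition x1plus (x : nat -> R) : R := Rmin 1 (Rmax 0 (x 1%nat)).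
Definition x1minus (x : nat -> R) : R := Rmin 0 (x 1%nat).

Definition cx (n : nat) (w x : nat -> R) (t : R) : R :=
  norm2 n (fun j => x j - phi w t x j).

Definition smooth (f : R -> R) : Prop :=
  exists D : nat -> R -> R,
    D O = f /\ forall k t, derivable_pt_lim (D k) t (D (S k) t).

Definition strongly_convex_on (S : R -> Prop) (f : R -> R) : Prop :=
  exists mu, 0 < mu /\
    forall a b l, S a -> S b -> 0 <= l <= 1 ->
      f (l * a + (1 - l) * b)
        <= l * f a + (1 - l) * f b - mu / 2 * l * (1 - l) * (a - b) ^ 2.

(* interval [a, b] (b = Some _) or [a, oo) (b = None) *)
Definition in_piece (a : R) (b : option R) (t : R) : Prop :=
  a <= t /\ match b with Some b' => t <= b' | None => True end.

Definition below_end (t : R) (b : option R) : Prop :=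
  match b with Some b' => t < b' | None => True end.

Definition breakpt (w x : nat -> R) (j : nat) : R := w 1%nat / w j * x j.

(* Main.v *)
Require Import Defs.
From Stdlib Require Import Reals Lra Lia Psatz.
Open Scope R_scope.

Lemma sumR_ext n f g : (forall j, (1 <= j <= n)%nat -> f j = g j) -> sumR n f = sumR n g.
Proof. induction n; simpl; intros H; auto. rewrite IHn by (intros; apply H; lia). rewrite H by lia. reflexivity. Qed.

Lemma sumR_le n f g : (forall j, (1 <= j <= n)%nat -> f j <= g j) -> sumR n f <= sumR n g.
Proof. induction n; simpl; intros H; [lra|]. assert (H1 := H (S n) ltac:(lia)). assert (sumR n f <= sumR n g) by (apply IHn; intros; apply H; lia). lra. Qed.

Lemma sumR_lt n f g k : (forall j, (1 <= j <= n)%nat -> f j <= g j) -> (1 <= k <= n)%nat -> f k < g k -> sumR n f < sumR n g.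
Proof. induction n; simpl; intros H Hk Hfk; [lia|].
  assert (H1 := H (S n) ltac:(lia)).
  destruct (Nat.eq_dec k (S n)) as [->|Hne].
  - assert (sumR n f <= sumR n g) by (apply sumR_le; intros; apply H; lia). lra.
  - assert (sumR n f < sumR n g) by (apply IHn; [intros; apply H; lia | lia | exact Hfk]). lra. Qed.

Lemma sumR_eq_le n f g : (forall j, (1 <= j <= n)%nat -> f j <= g j) -> sumR n f = sumR n g ->
  forall j, (1 <= j <= n)%nat -> f j = g j.
Proof. intros H He j Hj. destruct (Rle_lt_or_eq_dec _ _ (H j Hj)) as [Hl|]; auto.
  assert (sumR n f < sumR n g) by (eapply sumR_lt; eauto). lra. Qed.

Lemma sumR_ind1 n c : (1 <= n)%nat -> sumR n (fun j => if Nat.eqb j 1 then c else 0) = c.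
Proof. induction n; intros Hn; [lia|]. simpl sumR. destruct n.
  - simpl. ring.
  - rewrite IHn by lia. simpl. ring. Qed.

Definition ppos (u : R) := Rmax u 0.
Definition aa (w : nat -> R) j := (w j / w 1%nat) ^ 2.
Definition T (w x : nat -> R) j t :=
  if Nat.eqb j 1 then (x 1%nat - t) ^ 2 else aa w j * (ppos (breakpt w x j - t)) ^ 2.

Lemma pos_ge0 u : 0 <= ppos u. Proof. unfold ppos, Rmax; destruct Rle_dec; lra. Qed.
Lemma pos_ge u : u <= ppos u. Proof. unfold ppos, Rmax; destruct Rle_dec; lra. Qed.
Lemma aa_ge0 w j : 0 <= aa w j. Proof. unfold aa. nra. Qed.

Lemma term_eq n w x t j : (forall j, (1 <= j <= n)%nat -> 0 < w j) -> (1 <= j <= n)%nat ->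
  (x j - phi w t x j) ^ 2 = T w x j t.
Proof. intros Hw Hj. unfold T, phi. destruct (Nat.eqb j 1) eqn:E.
  - apply Nat.eqb_eq in E; subst; reflexivity.
  - assert (H1 := Hw 1%nat ltac:(lia)). assert (H2 := Hw j Hj).
    unfold breakpt, aa, ppos. destruct Rle_dec as [Hle|Hle].
    + rewrite Rmax_left by lra.
      replace (x j - w j / w 1%nat * t) with (w j / w 1%nat * (w 1%nat / w j * x j - t)) by (field; lra).
      ring.
    + rewrite Rmax_right by lra. ring. Qed.

Lemma cx_eq n w x t : (forall j, (1 <= j <= n)%nat -> 0 < w j) ->
  cx n w x t = sumR n (fun j => T w x j t).
Proof. intros Hw. unfold cx, norm2. apply sumR_ext. intros; apply term_eq with n; auto. Qed.

Definition Qd (f : R -> R) t l K := forall h, Rabs (f (t + h) - f t - l * h) <= K * h ^ 2.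

Lemma Qd_derive f t l K : Qd f t l K -> derivable_pt_lim f t l.
Proof. intros HQ eps Heps.
  assert (Hp : 0 < eps / (Rabs K + 1)).
  { apply Rdiv_lt_0_compat; auto. pose proof (Rabs_pos K); lra. }
  exists (mkposreal _ Hp). simpl. intros h Hh0 Hh.
  assert (Hah : 0 < Rabs h) by (apply Rabs_pos_lt; auto).
  replace ((f (t + h) - f t) / h - l) with ((f (t + h) - f t - l * h) / h) by (field; auto).
  unfold Rdiv. rewrite Rabs_mult, Rabs_inv.
  assert (HQh := HQ h).
  assert (Hh2 : h ^ 2 = Rabs h * Rabs h) by (rewrite <- Rabs_mult; rewrite Rabs_right; [ring| nra]).
  rewrite Hh2 in HQh.
  assert (HK : K <= Rabs K) by apply RRle_abs.
  assert (Rabs (f (t + h) - f t - l * h) * / Rabs h <= K * Rabs h).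
  { apply (Rmult_le_reg_r (Rabs h)); auto. rewrite Rmult_assoc, Rinv_l by lra. lra. }
  assert (Rabs K * Rabs h < (Rabs K + 1) * (eps / (Rabs K + 1))).
  { pose proof (Rabs_pos K). nra. }
  replace ((Rabs K + 1) * (eps / (Rabs K + 1))) with eps in * by (field; pose proof (Rabs_pos K); lra).
  pose proof (Rabs_pos K). nra. Qed.

Lemma Qd_ext f g t l K : (forall s, f s = g s) -> Qd g t l K -> Qd f t l K.
Proof. intros E H h. rewrite !E. apply H. Qed.

Lemma sumR_Qd n (F : nat -> R -> R) t L K :
  (forall j, (1 <= j <= n)%nat -> Qd (F j) t (L j) (K j)) ->
  Qd (fun s => sumR n (fun j => F j s)) t (sumR n L) (sumR n K).
Proof. induction n; intros H h; simpl.
  - replace (0 - 0 - 0 * h) with 0 by ring. rewrite Rabs_R0. lra.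
  - assert (H1 := H (S n) ltac:(lia) h). assert (H2 := IHn ltac:(intros; apply H; lia) h). simpl in H2.
    replace (sumR n (fun j => F j (t + h)) + F (S n) (t + h) - (sumR n (fun j => F j t) + F (S n) t) -
      (sumR n L + L (S n)) * h) with
     ((sumR n (fun j => F j (t + h)) - sumR n (fun j => F j t) - sumR n L * h) +
      (F (S n) (t + h) - F (S n) t - L (S n) * h)) by ring.
    eapply Rle_trans; [apply Rabs_triang|]. lra. Qed.

Definition SCp (f : R -> R) K := forall a b l, 0 <= l <= 1 ->
  f (l * a + (1 - l) * b) <= l * f a + (1 - l) * f b - K * l * (1 - l) * (a - b) ^ 2.

Lemma sumR_SC n (F : nat -> R -> R) K :
  (forall j, (1 <= j <= n)%nat -> SCp (F j) (K j)) ->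
  SCp (fun s => sumR n (fun j => F j s)) (sumR n K).
Proof. induction n; intros H a b l Hl; simpl.
  - lra.
  - assert (H1 := H (S n) ltac:(lia) a b l Hl). assert (H2 := IHn ltac:(intros; apply H; lia) a b l Hl). simpl in H2.
    lra. Qed.

Lemma SCp_ext f g K : (forall s, f s = g s) -> SCp g K -> SCp f K.
Proof. intros E H a b l Hl. rewrite !E. apply H; auto. Qed.

Lemma sq_SC al c K : 0 <= K <= al -> SCp (fun t => al * (c - t) ^ 2) K.
Proof. intros HK a b l Hl.
  assert (0 <= l * (1 - l) * (a - b) ^ 2) by (apply Rmult_le_pos; [apply Rmult_le_pos; lra | apply pow2_ge_0]).
  assert (E: l * (al * (c - a) ^ 2) + (1 - l) * (al * (c - b) ^ 2) - al * (c - (l * a + (1 - l) * b)) ^ 2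
     = al * (l * (1 - l) * (a - b) ^ 2)) by ring.
  nra. Qed.

Lemma possq_SC al c : 0 <= al -> SCp (fun t => al * (ppos (c - t)) ^ 2) 0.
Proof. intros Hal a b l Hl.
  set (P := ppos (c - a)). set (Q := ppos (c - b)).
  assert (HP := pos_ge0 (c - a)). assert (HQ := pos_ge0 (c - b)).
  assert (HP' := pos_ge (c - a)). assert (HQ' := pos_ge (c - b)).
  fold P Q in HP, HQ, HP', HQ'.
  assert (Hm : ppos (c - (l * a + (1 - l) * b)) <= l * P + (1 - l) * Q).
  { unfold ppos at 1, Rmax. destruct Rle_dec; nra. }
  assert (Hm0 := pos_ge0 (c - (l * a + (1 - l) * b))).
  assert (ppos (c - (l * a + (1 - l) * b)) ^ 2 <= (l * P + (1 - l) * Q) ^ 2) by (apply pow_incr; lra).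
  assert ((l * P + (1 - l) * Q) ^ 2 <= l * P ^ 2 + (1 - l) * Q ^ 2).
  { assert (0 <= l * (1 - l) * (P - Q) ^ 2) by (apply Rmult_le_pos; [apply Rmult_le_pos; lra | apply pow2_ge_0]).
    assert (E: l * P ^ 2 + (1 - l) * Q ^ 2 - (l * P + (1 - l) * Q) ^ 2 = l * (1 - l) * (P - Q) ^ 2) by ring.
    lra. }
  assert (al * ppos (c - (l * a + (1 - l) * b)) ^ 2 <= al * (l * P ^ 2 + (1 - l) * Q ^ 2)) by
    (apply Rmult_le_compat_l; lra).
  nra. Qed.

Lemma possq_rem u v : Rabs (ppos v ^ 2 - ppos u ^ 2 - 2 * ppos u * (v - u)) <= (v - u) ^ 2.
Proof. apply Rabs_le. unfold ppos, Rmax. pose proof (pow2_ge_0 (v - u)).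
  destruct (Rle_dec v 0); destruct (Rle_dec u 0); split; nra. Qed.

Lemma pos_lip u v : Rabs (ppos u - ppos v) <= Rabs (u - v).
Proof. pose proof (Rle_abs (u - v)). pose proof (Rle_abs (- (u - v))). rewrite Rabs_Ropp in *.
  apply Rabs_le. unfold ppos, Rmax. destruct (Rle_dec u 0); destruct (Rle_dec v 0); split; lra. Qed.

Definition DT (w x : nat -> R) j t :=
  if Nat.eqb j 1 then -2 * (x 1%nat - t) else -2 * aa w j * ppos (breakpt w x j - t).
Definition KQ (w : nat -> R) j := if Nat.eqb j 1 then 1 else aa w j.

Lemma T_Qd w x j t : Qd (T w x j) t (DT w x j t) (KQ w j).
Proof. intros h. unfold T, DT, KQ. destruct (Nat.eqb j 1).
  - replace ((x 1%nat - (t + h)) ^ 2 - (x 1%nat - t) ^ 2 - -2 * (x 1%nat - t) * h) with (h ^ 2) by ring.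
    rewrite Rabs_right by (apply Rle_ge, pow2_ge_0). lra.
  - set (b := breakpt w x j).
    replace (aa w j * ppos (b - (t + h)) ^ 2 - aa w j * ppos (b - t) ^ 2 - -2 * aa w j * ppos (b - t) * h)
      with (aa w j * (ppos (b - t - h) ^ 2 - ppos (b - t) ^ 2 - 2 * ppos (b - t) * ((b - t - h) - (b - t))))
      by (replace (b - (t + h)) with (b - t - h) by ring; ring).
    rewrite Rabs_mult, (Rabs_right (aa w j)) by (apply Rle_ge, aa_ge0).
    replace (h ^ 2) with ((b - t - h - (b - t)) ^ 2) by ring.
    apply Rmult_le_compat_l; [apply aa_ge0 | apply possq_rem]. Qed.

Definition dcx n w x t := sumR n (fun j => DT w x j t).

Lemma cx_Qd n w x t : (forall j, (1 <= j <= n)%nat -> 0 < w j) ->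
  Qd (cx n w x) t (dcx n w x t) (sumR n (KQ w)).
Proof. intros Hw. apply Qd_ext with (fun s => sumR n (fun j => T w x j s)).
  { intros; apply cx_eq; auto. }
  unfold dcx. apply sumR_Qd. intros; apply T_Qd. Qed.

Lemma cx_deriv n w x t : (forall j, (1 <= j <= n)%nat -> 0 < w j) ->
  derivable_pt_lim (cx n w x) t (dcx n w x t).
Proof. intros Hw. eapply Qd_derive. apply cx_Qd; auto. Qed.

Lemma cx_cont n w x t : (forall j, (1 <= j <= n)%nat -> 0 < w j) -> continuity_pt (cx n w x) t.
Proof. intros Hw. apply derivable_continuous_pt. exists (dcx n w x t). apply cx_deriv; auto. Qed.

Definition LL (w : nat -> R) j := if Nat.eqb j 1 then 2 else 2 * aa w j.

Lemma sumR_lip n (F : nat -> R -> R) L s t :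
  (forall j, (1 <= j <= n)%nat -> Rabs (F j s - F j t) <= L j * Rabs (s - t)) ->
  Rabs (sumR n (fun j => F j s) - sumR n (fun j => F j t)) <= sumR n L * Rabs (s - t).
Proof. induction n; intros H; simpl.
  - replace (0 - 0) with 0 by ring. rewrite Rabs_R0. lra.
  - assert (H1 := H (S n) ltac:(lia)). assert (H2 := IHn ltac:(intros; apply H; lia)).
    replace (sumR n (fun j => F j s) + F (S n) s - (sumR n (fun j => F j t) + F (S n) t))
      with ((sumR n (fun j => F j s) - sumR n (fun j => F j t)) + (F (S n) s - F (S n) t)) by ring.
    eapply Rle_trans; [apply Rabs_triang|]. lra. Qed.

Lemma sumR_nonneg n f : (forall j, (1 <= j <= n)%nat -> 0 <= f j) -> 0 <= sumR n f.
Proof. intros H. replace 0 with (sumR n (fun _ => 0)).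
  - apply sumR_le; auto.
  - induction n; simpl; auto. rewrite IHn; [ring|]. intros; apply H; lia. Qed.

Lemma dcx_lip n w x s t : Rabs (dcx n w x s - dcx n w x t) <= sumR n (LL w) * Rabs (s - t).
Proof. unfold dcx. apply sumR_lip. intros j _. unfold DT, LL. destruct (Nat.eqb j 1).
  - replace (-2 * (x 1%nat - s) - -2 * (x 1%nat - t)) with (2 * (s - t)) by ring.
    rewrite Rabs_mult, Rabs_right by lra. lra.
  - replace (-2 * aa w j * ppos (breakpt w x j - s) - -2 * aa w j * ppos (breakpt w x j - t))
      with ((2 * aa w j) * (ppos (breakpt w x j - t) - ppos (breakpt w x j - s))) by ring.
    rewrite Rabs_mult, (Rabs_right (2 * aa w j)) by (pose proof (aa_ge0 w j); lra).
    apply Rmult_le_compat_l; [pose proof (aa_ge0 w j); lra|].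
    eapply Rle_trans; [apply pos_lip|]. replace (breakpt w x j - t - (breakpt w x j - s)) with (s - t) by ring. lra. Qed.

Lemma dcx_cont n w x t : continuity_pt (dcx n w x) t.
Proof. unfold continuity_pt, continue_in, limit1_in, limit_in. intros eps Heps.
  set (L := sumR n (LL w)).
  assert (HL : 0 <= L).
  { apply sumR_nonneg. intros j _. unfold LL. destruct (Nat.eqb j 1); [lra|]. pose proof (aa_ge0 w j); lra. }
  exists (eps / (L + 1)). split.
  { apply Rlt_gt, Rdiv_lt_0_compat; lra. }
  intros y [_ Hy]. simpl in *. unfold R_dist in *.
  eapply Rle_lt_trans; [apply dcx_lip|]. fold L.
  assert (L * Rabs (y - t) <= (L + 1) * Rabs (y - t)) by (pose proof (Rabs_pos (y - t)); nra).
  assert ((L + 1) * Rabs (y - t) < (L + 1) * (eps / (L + 1))) by (apply Rmult_lt_compat_l; lra).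
  replace ((L + 1) * (eps / (L + 1))) with eps in * by (field; lra). lra. Qed.

Definition K1 (j : nat) := if Nat.eqb j 1 then 1 else 0.

Lemma cx_SC n w x : (forall j, (1 <= j <= n)%nat -> 0 < w j) -> SCp (cx n w x) (sumR n K1).
Proof. intros Hw. apply SCp_ext with (fun s => sumR n (fun j => T w x j s)).
  { intros; apply cx_eq; auto. }
  apply sumR_SC. intros j _. unfold T, K1. destruct (Nat.eqb j 1).
  - apply SCp_ext with (fun t => 1 * (x 1%nat - t) ^ 2). { intros; ring. } apply sq_SC; lra.
  - apply possq_SC, aa_ge0. Qed.

Lemma K1_sum n : (1 <= n)%nat -> sumR n K1 = 1.
Proof. intros; unfold K1; apply sumR_ind1; auto. Qed.

Definition al (w x : nat -> R) a j := if Nat.eqb j 1 then 1 else if Rlt_dec a (breakpt w x j) then aa w j else 0.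
Definition cc (w x : nat -> R) j := if Nat.eqb j 1 then x 1%nat else breakpt w x j.
Definition G0 n w x a t := sumR n (fun j => al w x a j * (cc w x j - t) ^ 2).
Definition G1 n w x a t := sumR n (fun j => -2 * al w x a j * (cc w x j - t)).
Definition G2 n w x a (t : R) := sumR n (fun j => 2 * al w x a j).

Lemma al_ge0 w x a j : 0 <= al w x a j.
Proof. unfold al. destruct (Nat.eqb j 1); [lra|]. destruct Rlt_dec; [apply aa_ge0|lra]. Qed.

Lemma sq_Qd a c t : Qd (fun t => a * (c - t) ^ 2) t (-2 * a * (c - t)) (Rabs a).
Proof. intros h. replace (a * (c - (t + h)) ^ 2 - a * (c - t) ^ 2 - -2 * a * (c - t) * h) with (a * h ^ 2) by ring.
  rewrite Rabs_mult, (Rabs_right (h ^ 2)) by (apply Rle_ge, pow2_ge_0). lra. Qed.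

Lemma lin_Qd a c t : Qd (fun t => -2 * a * (c - t)) t (2 * a) 0.
Proof. intros h. replace (-2 * a * (c - (t + h)) - -2 * a * (c - t) - 2 * a * h) with 0 by ring.
  rewrite Rabs_R0. lra. Qed.

Lemma G_smooth n w x a : smooth (G0 n w x a).
Proof.
  exists (fun k => match k with 0 => G0 n w x a | 1 => G1 n w x a | 2 => G2 n w x a | _ => fun _ => 0 end).
  split; [reflexivity|]. intros k t. destruct k as [|[|[|k]]].
  - eapply Qd_derive. unfold G0, G1. apply sumR_Qd. intros; apply sq_Qd.
  - eapply Qd_derive. unfold G1, G2.
    apply Qd_ext with (fun s => sumR n (fun j => -2 * al w x a j * (cc w x j - s))); [reflexivity|].
    replace (sumR n (fun j => 2 * al w x a j)) with (sumR n (fun j => 2 * al w x a j)) by reflexivity.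
    eapply Qd_ext; [intros; reflexivity|].
    assert (Qd (fun s => sumR n (fun j => -2 * al w x a j * (cc w x j - s))) t (sumR n (fun j => 2 * al w x a j)) (sumR n (fun _ => 0))) as H.
    { apply sumR_Qd. intros; apply lin_Qd. }
    exact H.
  - eapply Qd_derive. intros h. unfold G2. replace (sumR n (fun j => 2 * al w x a j) - sumR n (fun j => 2 * al w x a j) - 0 * h) with 0 by ring.
    rewrite Rabs_R0. instantiate (1 := 0). lra.
  - apply derivable_pt_lim_const. Qed.

Lemma SCp_sc S f : SCp f 1 -> strongly_convex_on S f.
Proof. intros H. exists 2. split; [lra|]. intros a b l _ _ Hl. specialize (H a b l Hl).
  replace (2 / 2) with 1 by field. lra. Qed.

Lemma G_SC n w x a : (1 <= n)%nat -> SCp (G0 n w x a) 1.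
Proof. intros Hn. rewrite <- (K1_sum n Hn). unfold G0. apply sumR_SC. intros j _.
  unfold K1. pose proof (al_ge0 w x a j). destruct (Nat.eqb j 1) eqn:E.
  - apply sq_SC. unfold al. rewrite E. lra.
  - apply sq_SC. lra. Qed.

Lemma part_i n w x (Hn : (1 <= n)%nat) (Hw : forall j, (1 <= j <= n)%nat -> 0 < w j) :
  forall (a : R) (b : option R),
     x1minus x <= a -> below_end a b ->
     (forall j, (2 <= j <= n)%nat ->
        ~ (a < breakpt w x j /\ below_end (breakpt w x j) b)) ->
     exists g : R -> R,
       smooth g /\
       (forall t, in_piece a b t -> cx n w x t = g t) /\
       strongly_convex_on (in_piece a b) g.
Proof. intros a b _ _ Hnb. exists (G0 n w x a). split; [apply G_smooth|]. split.
  - intros t [Hat Hbt]. rewrite cx_eq by auto. unfold G0. apply sumR_ext. intros j Hj.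
    unfold T, al, cc. destruct (Nat.eqb j 1) eqn:E; [ring|].
    assert (Hj2 : (2 <= j <= n)%nat) by (apply Nat.eqb_neq in E; lia).
    specialize (Hnb j Hj2). unfold ppos.
    destruct (Rlt_dec a (breakpt w x j)) as [Hl|Hl].
    + destruct b as [b'|]; simpl in *.
      * rewrite Rmax_left. ring. assert (~ breakpt w x j < b') by tauto. lra.
      * exfalso; tauto.
    + rewrite Rmax_right by lra. ring.
  - apply SCp_sc, G_SC; auto. Qed.

Section S.
Variables (n : nat) (w x : nat -> R).
Hypothesis Hn : (1 <= n)%nat.
Hypothesis Hw : forall j, (1 <= j <= n)%nat -> 0 < w j.

Lemma cx_SC1 : SCp (cx n w x) 1.
Proof. rewrite <- (K1_sum n Hn). apply cx_SC; auto. Qed.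

Lemma cx_ge_T1 t : (x 1%nat - t) ^ 2 <= cx n w x t.
Proof. rewrite cx_eq by auto. rewrite <- (sumR_ind1 n ((x 1%nat - t) ^ 2) Hn). apply sumR_le.
  intros j _. unfold T. destruct (Nat.eqb j 1); [lra|].
  apply Rmult_le_pos; [apply aa_ge0|apply pow2_ge_0]. Qed.

Lemma cx_ge0 t : 0 <= cx n w x t.
Proof. pose proof (cx_ge_T1 t). pose proof (pow2_ge_0 (x 1%nat - t)). lra. Qed.

Lemma cx_min_exists : exists t0, x1minus x <= t0 /\
     forall t, x1minus x <= t -> cx n w x t0 <= cx n w x t.
Proof. set (L := x1minus x). set (B := Rmax L (x 1%nat + cx n w x L + 1)).
  assert (HLB : L <= B) by apply Rmax_l.
  destruct (continuity_ab_min (cx n w x) L B HLB) as [mx [Hm Hmx]].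
  { intros; apply cx_cont; auto. }
  exists mx. split; [lra|]. intros t Ht.
  destruct (Rle_dec t B) as [HtB|HtB]; [apply Hm; lra|].
  assert (HB2 : x 1%nat + cx n w x L + 1 <= B) by apply Rmax_r.
  pose proof (cx_ge0 L). pose proof (cx_ge_T1 t).
  assert (cx n w x mx <= cx n w x L) by (apply Hm; lra).
  assert (t - x 1%nat <= (x 1%nat - t) ^ 2) by nra. lra. Qed.

Lemma between s t m : cx n w x s <= cx n w x t -> (s <= m <= t \/ t <= m <= s) -> cx n w x m <= cx n w x t.
Proof. intros Hst Hm.
  destruct (Req_dec s t) as [->|Hne]. { assert (m = t) by lra. subst; lra. }
  set (l := (m - s) / (t - s)).
  assert (Hl : 0 <= l <= 1).
  { unfold l. destruct Hm as [Hm|Hm].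
    - assert (t - s > 0) by lra. split.
      + apply Rmult_le_pos; [lra|]. left; apply Rinv_0_lt_compat; lra.
      + apply (Rmult_le_reg_r (t - s)); [lra|]. unfold Rdiv. rewrite Rmult_assoc, Rinv_l by lra. lra.
    - assert (s - t > 0) by lra.
      replace ((m - s) / (t - s)) with ((s - m) / (s - t)) by (field; lra). split.
      + apply Rmult_le_pos; [lra|]. left; apply Rinv_0_lt_compat; lra.
      + apply (Rmult_le_reg_r (s - t)); [lra|]. unfold Rdiv. rewrite Rmult_assoc, Rinv_l by lra. lra. }
  assert (Hmeq : m = l * t + (1 - l) * s) by (unfold l; field; lra).
  pose proof (cx_SC1 t s l Hl). rewrite <- Hmeq in H.
  assert (0 <= 1 * l * (1 - l) * (t - s) ^ 2) by (rewrite Rmult_1_l; apply Rmult_le_pos; [apply Rmult_le_pos; lra|apply pow2_ge_0]).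
  nra. Qed.

Lemma tstar_ge_x1 tstar : x1minus x <= tstar ->
  (forall t, x1minus x <= t -> cx n w x tstar <= cx n w x t) -> x 1%nat <= tstar.
Proof. intros H1 H2. destruct (Rle_dec (x 1%nat) tstar) as [|Hlt]; auto. exfalso.
  assert (HL : x1minus x <= x 1%nat) by (unfold x1minus; apply Rmin_r).
  specialize (H2 _ HL).
  assert (cx n w x (x 1%nat) < cx n w x tstar); [|lra].
  rewrite !cx_eq by auto. apply sumR_lt with 1%nat; [| lia |].
  - intros j _. unfold T. destruct (Nat.eqb j 1).
    + replace (x 1%nat - x 1%nat) with 0 by ring. pose proof (pow2_ge_0 (x 1%nat - tstar)). simpl; lra.
    + apply Rmult_le_compat_l; [apply aa_ge0|]. apply pow_incr. split; [apply pos_ge0|].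
      unfold ppos, Rmax. destruct Rle_dec; destruct Rle_dec; lra.
  - unfold T. simpl. nra. Qed.

Lemma phi_1 t : phi w t x 1%nat = t.
Proof. reflexivity. Qed.

Lemma phi_j t j : j <> 1%nat -> phi w t x j =
  if Rle_dec t (w 1%nat / w j * x j) then w j / w 1%nat * t else x j.
Proof. intros H. unfold phi. rewrite (proj2 (Nat.eqb_neq j 1) H). reflexivity. Qed.

Hypothesis Hx : forall j, (2 <= j <= n)%nat -> 0 < x j.

Lemma term_le t j z : (2 <= j <= n)%nat -> 0 <= z -> w 1%nat * z <= w j * t ->
  (x j - phi w t x j) ^ 2 <= (x j - z) ^ 2 /\
  ((x j - phi w t x j) ^ 2 = (x j - z) ^ 2 -> z = phi w t x j).
Proof. intros Hj Hz Hc. rewrite phi_j by lia.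
  assert (H1 := Hw 1%nat ltac:(lia)). assert (H2 := Hw j ltac:(lia)). assert (H3 := Hx j Hj).
  set (r := w j / w 1%nat).
  assert (Hr : 0 < r) by (unfold r; apply Rdiv_lt_0_compat; lra).
  assert (Hrw : r * w 1%nat = w j) by (unfold r; field; lra).
  assert (Hzr : z <= r * t).
  { apply (Rmult_le_reg_l (w 1%nat)); [lra|]. nra. }
  destruct Rle_dec as [Hle|Hle].
  - assert (r * t <= x j).
    { replace (x j) with (r * (w 1%nat / w j * x j)) by (unfold r; field; lra).
      apply Rmult_le_compat_l; lra. }
    split; [apply pow_incr; lra|]. intros E.
    assert (E2 : ((x j - z) - (x j - r * t)) * ((x j - z) + (x j - r * t)) = 0) by (replace (((x j - z) - (x j - r * t)) * ((x j - z) + (x j - r * t))) with ((x j - z) ^ 2 - (x j - r * t) ^ 2) by ring; rewrite <- E; ring).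
    apply Rmult_integral in E2. destruct E2; lra.
  - replace (x j - x j) with 0 by ring. split; [replace (0 ^ 2) with 0 by ring; apply pow2_ge_0|]. intros E.
    assert (E2 : (x j - z) * (x j - z) = 0) by (replace ((x j - z) * (x j - z)) with ((x j - z) ^ 2) by ring; rewrite <- E; ring).
    apply Rmult_integral in E2. destruct E2; lra. Qed.

Lemma phi_Omega th : 0 <= th <= 1 -> Omega1 n w (phi w th x).
Proof. intros Hth. split; [|split].
  - intros j Hj. destruct (Nat.eq_dec j 1) as [->|Hne]; [rewrite phi_1; lra|].
    rewrite phi_j by auto. destruct Rle_dec.
    + apply Rmult_le_pos; [|lra]. left; apply Rdiv_lt_0_compat; apply Hw; lia.
    + left; apply Hx; lia.
  - rewrite phi_1; lra.
  - intros j Hj. rewrite phi_1. rewrite phi_j by lia.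
    assert (H1 := Hw 1%nat ltac:(lia)). assert (H2 := Hw j ltac:(lia)).
    destruct Rle_dec as [Hle|Hle].
    + right. field. lra.
    + assert (w j * (w 1%nat / w j * x j) <= w j * th) by (apply Rmult_le_compat_l; lra).
      replace (w j * (w 1%nat / w j * x j)) with (w 1%nat * x j) in H by (field; lra). lra. Qed.

Lemma norm_phi t : norm2 n (fun j => x j - phi w t x j) = cx n w x t.
Proof. reflexivity. Qed.

Lemma proj_main th : 0 <= th <= 1 -> (forall t, 0 <= t <= 1 -> cx n w x th <= cx n w x t) ->
  forall z, Omega1 n w z ->
  cx n w x th <= norm2 n (fun j => x j - z j) /\
  (norm2 n (fun j => x j - z j) = cx n w x th -> forall j, (1 <= j <= n)%nat -> z j = phi w th x j).
Proof. intros Hth Hmin z [Hz0 [Hz1 Hzc]].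
  set (t := z 1%nat). assert (Ht : 0 <= t <= 1) by (split; [apply Hz0; lia|exact Hz1]).
  assert (Hle : forall j, (1 <= j <= n)%nat -> (x j - phi w t x j) ^ 2 <= (x j - z j) ^ 2).
  { intros j Hj. destruct (Nat.eq_dec j 1) as [->|Hne].
    - rewrite phi_1. unfold t. lra.
    - apply term_le; [lia| apply Hz0; lia | apply Hzc; lia]. }
  assert (Hct : cx n w x t <= norm2 n (fun j => x j - z j)) by (apply sumR_le; auto).
  assert (Hth2 := Hmin t Ht).
  split; [lra|]. intros E.
  assert (Eq : cx n w x t = cx n w x th) by lra.
  assert (Ett : t = th).
  { destruct (Req_dec t th) as [|Hne]; auto. exfalso.
    assert (Hh : 0 <= /2 <= 1) by lra.
    pose proof (cx_SC1 t th (/2) Hh).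
    assert (Hmm := Hmin (/2 * t + (1 - /2) * th) ltac:(lra)).
    assert (0 < (t - th) ^ 2) by (pose proof (pow2_ge_0 (t - th)); assert ((t - th) ^ 2 <> 0) by (apply pow_nonzero; lra); lra). nra. }
  assert (Esum : forall j, (1 <= j <= n)%nat -> (x j - phi w t x j) ^ 2 = (x j - z j) ^ 2).
  { apply sumR_eq_le; auto. change (cx n w x t = norm2 n (fun j => x j - z j)). lra. }
  intros j Hj. rewrite <- Ett. destruct (Nat.eq_dec j 1) as [->|Hne].
  - rewrite phi_1. reflexivity.
  - apply (term_le t j (z j)); [lia| apply Hz0; lia | apply Hzc; lia | apply Esum; auto]. Qed.

End S.
Lemma norm2_ge0 n v : 0 <= norm2 n v.
Proof. unfold norm2. apply sumR_nonneg. intros; apply pow2_ge_0. Qed.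

Theorem mainTheorem4 (n : nat) (w x : nat -> R)
  (Hn : (1 <= n)%nat)
  (Hw : forall j, (1 <= j <= n)%nat -> 0 < w j)
  (Hx : forall j, (2 <= j <= n)%nat -> 0 < x j) :
  (forall (a : R) (b : option R),
     x1minus x <= a -> below_end a b ->
     (forall j, (2 <= j <= n)%nat ->
        ~ (a < breakpt w x j /\ below_end (breakpt w x j) b)) ->
     exists g : R -> R,
       smooth g /\
       (forall t, in_piece a b t -> cx n w x t = g t) /\
       strongly_convex_on (in_piece a b) g) /\
  (forall j, (2 <= j <= n)%nat ->
     exists delta (d : R -> R), 0 < delta /\
       (forall t, Rabs (t - breakpt w x j) < delta ->
                  derivable_pt_lim (cx n w x) t (d t)) /\
       continuity_pt d (breakpt w x j)) /\
  strongly_convex_on (fun t => x1minus x <= t) (cx n w x) /\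
  (exists t0, x1minus x <= t0 /\
     forall t, x1minus x <= t -> cx n w x t0 <= cx n w x t) /\
  (forall tstar, x1minus x <= tstar ->
     (forall t, x1minus x <= t -> cx n w x tstar <= cx n w x t) ->
     let p := if Rlt_dec tstar (x1plus x) then phi w (x1plus x) x
              else if Rle_dec tstar 1 then phi w tstar x
              else phi w 1 x in
     forall z : nat -> R,
       (Omega1 n w z /\
        forall z', Omega1 n w z' ->
          enorm n (fun j => x j - z j) <= enorm n (fun j => x j - z' j))
       <-> (forall j, (1 <= j <= n)%nat -> z j = p j)).
Proof.
  split; [apply part_i; auto|]. split.
  { intros j Hj. exists 1, (dcx n w x). split; [lra|]. split.
    - intros; apply cx_deriv; auto.
    - apply dcx_cont. }
  split; [apply SCp_sc, cx_SC1; auto|].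
  split; [apply cx_min_exists; auto|].
  intros tstar H1 H2 p z.
  assert (Hx1 := tstar_ge_x1 n w x Hn Hw tstar H1 H2).
  assert (Hm0 : x1minus x <= 0) by (unfold x1minus; apply Rmin_l).
  assert (Hp : exists th, p = phi w th x /\ 0 <= th <= 1 /\
             forall t, 0 <= t <= 1 -> cx n w x th <= cx n w x t).
  { unfold p. destruct (Rlt_dec tstar (x1plus x)) as [Hl|Hl].
    - assert (E : x1plus x = 0 /\ tstar < 0).
      { unfold x1plus in *. destruct (Rle_dec 0 (x 1%nat)).
        + rewrite Rmax_right in Hl by lra. pose proof (Rmin_r 1 (x 1%nat)). lra.
        + rewrite Rmax_left in * by lra. rewrite Rmin_right in * by lra. lra. }
      destruct E as [E E']. rewrite E. exists 0. split; [reflexivity|]. split; [lra|].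
      intros t Ht. apply between with tstar; auto. apply H2; lra. lra.
    - assert (Hp0 : 0 <= x1plus x).
      { unfold x1plus. apply Rmin_glb; [lra|apply Rmax_l]. }
      destruct (Rle_dec tstar 1).
      + exists tstar. split; [reflexivity|]. split; [lra|]. intros t Ht. apply H2; lra.
      + exists 1. split; [reflexivity|]. split; [lra|].
        intros t Ht. apply between with tstar; auto. apply H2; lra. lra. }
  destruct Hp as [th [-> [Hth Hmin]]].
  split.
  - intros [Hz Hmz].
    destruct (proj_main n w x Hn Hw Hx th Hth Hmin z Hz) as [A B]. apply B.
    assert (Hle := Hmz (phi w th x) (phi_Omega n w x Hn Hw Hx th Hth)).
    unfold enorm in Hle. apply sqrt_le_0 in Hle; try apply norm2_ge0.
    change (norm2 n (fun j => x j - phi w th x j)) with (cx n w x th) in Hle. lra.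
  - intros Heq. destruct (phi_Omega n w x Hn Hw Hx th Hth) as [O1 [O2 O3]].
    assert (Hz : Omega1 n w z).
    { split; [|split].
      - intros j Hj; rewrite Heq; auto.
      - rewrite Heq by lia; auto.
      - intros j Hj; rewrite !Heq by lia; apply O3; auto. }
    split; auto. intros z' Hz'. unfold enorm. apply sqrt_le_1_alt.
    replace (norm2 n (fun j => x j - z j)) with (cx n w x th).
    + apply (proj_main n w x Hn Hw Hx th Hth Hmin z' Hz').
    + unfold cx, norm2. apply sumR_ext. intros j Hj. rewrite Heq; auto.
Qed.
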